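(* Let $p\in(1/2,1)$, $\alpha=p/(1-p)$ and $V\in\{G,B\}$. Then $$\lim_{\epsilon\to1}\mathbb{P}_{Y\text{-cas}}(\epsilon)=\frac{1}{e^{t}-t},$$ where $t=\dfrac{\log\alpha}{\alpha-1}$ if $V=G$ and $t=\dfrac{\alpha\log\alpha}{\alpha-1}$ if $V=B$.
   Context: Observational learning model: an item has true value $V\in\{G,B\}$; agents arrive sequentially, each receives a private binary signal equal to the ''correct'' signal with probability $p\in(1/2,1)$, and each agent is independently fake with probability $\epsilon\in[0,1)$ (a fake agent's recorded action is always $Y$ = buy). Define $a=p+(1-p)\epsilon$, $b=p(1-\epsilon)$ and $\eta=\eta(\epsilon)=\log\big(a/(1-b)\big)/\log\alpha\in(0,1]$. Given $V$, let $p_f=a$ if $V=G$ and $p_f=1-b$ if $V=B$. Before any cascade, the agents' sufficient statistic $h$ evolves as the following random walk: $h_0=0$ and, independently at each step, $h$ increases by $\eta$ with probability $p_f$ (an observed $Y$) or decreases by $1$ with probability $1-p_f$ (an observed $N$); the walk is stopped the first time it leaves $[-1,1]$. Leaving above $1$ is a $Y$ cascade, leaving below $-1$ an $N$ cascade. $\mathbb{P}_{Y\text{-cas}}(\epsilon)$ denotes the probability (given $V$) that the walk leaves $[-1,1]$ above $1$. *)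

(* Defs.v *)
From Stdlib Require Import Reals.
From Coquelicot Require Import Coquelicot.
Open Scope R_scope.

(* True value of the item. *)
Inductive value := G | B.

Definition alpha (p : R) : R := p / (1 - p).
Definition a_par (p eps : R) : R := p + (1 - p) * eps.
Definition b_par (p eps : R) : R := p * (1 - eps).
Definition eta (p eps : R) : R :=
  ln (a_par p eps / (1 - b_par p eps)) / ln (alpha p).

(* probability of an observed Y given V *)
Definition p_f (p eps : R) (V : value) : R :=
  match V with G => a_par p eps | B => 1 - b_par p eps end.

(* exitY p eps V n x : probability that the random walk started at x
   (up-step +eta w.p. p_f, down-step -1 w.p. 1 - p_f, stopped at the
   first exit from [-1,1]) has left [-1,1] above 1 within n steps. *)
Fixpoint exitY (p eps : R) (V : value) (n : nat) (x : R) : R :=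
  match n with
  | O => if Rlt_dec 1 x then 1 else 0
  | S n' =>
      if Rle_dec (-1) x then
        if Rle_dec x 1 then
          p_f p eps V * exitY p eps V n' (x + eta p eps)
          + (1 - p_f p eps V) * exitY p eps V n' (x - 1)
        else 1
      else 0
  end.

(* P_{Y-cas}(eps): probability that the walk from h_0 = 0 ever leaves
   [-1,1] above 1 (limit of the nondecreasing bounded sequence). *)
Definition P_Ycas (p eps : R) (V : value) : R :=
  real (Lim_seq (fun n => exitY p eps V n 0)).

Definition t_par (p : R) (V : value) : R :=
  match V with
  | G => ln (alpha p) / (alpha p - 1)
  | B => alpha p * ln (alpha p) / (alpha p - 1)
  end.

(* Main.v *)
Require Import Defs.
From Stdlib Require Import Reals Lra Lia Psatz ZArith.
From Coquelicot Require Import Coquelicot.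
Open Scope R_scope.

Lemma exitY_S p eps V n x : exitY p eps V (S n) x =
  if Rle_dec (-1) x then
        if Rle_dec x 1 then
          p_f p eps V * exitY p eps V n (x + eta p eps)
          + (1 - p_f p eps V) * exitY p eps V n (x - 1)
        else 1
      else 0.
Proof. reflexivity. Qed.

Lemma exitY_bounds p eps V : 0 <= p_f p eps V <= 1 ->
  forall n x, 0 <= exitY p eps V n x <= 1.
Proof.
  intros Hq n; induction n as [|n IH]; intros x; cbn [exitY].
  - destruct (Rlt_dec 1 x); lra.
  - destruct (Rle_dec (-1) x); [destruct (Rle_dec x 1)|]; try lra.
    pose proof (IH (x + eta p eps)); pose proof (IH (x - 1)). nra.
Qed.

Lemma exitY_incr p eps V : 0 <= p_f p eps V <= 1 ->
  forall n x, exitY p eps V n x <= exitY p eps V (S n) x.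
Proof.
  intros Hq n; induction n as [|n IH]; intros x.
  - cbn [exitY]. pose proof (exitY_bounds p eps V Hq 0 (x + eta p eps)).
    pose proof (exitY_bounds p eps V Hq 0 (x - 1)).
    destruct (Rlt_dec 1 x); destruct (Rle_dec (-1) x); try destruct (Rle_dec x 1); try lra.
    cbn [exitY] in *. nra.
  - rewrite (exitY_S _ _ _ (S n)), (exitY_S _ _ _ n).
    destruct (Rle_dec (-1) x); [destruct (Rle_dec x 1)|]; try lra.
    pose proof (IH (x + eta p eps)); pose proof (IH (x - 1)). nra.
Qed.

Lemma exitY_monox p eps V : 0 <= p_f p eps V <= 1 ->
  forall n x y, x <= y -> exitY p eps V n x <= exitY p eps V n y.
Proof.
  intros Hq n; induction n as [|n IH]; intros x y Hxy; cbn [exitY].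
  - destruct (Rlt_dec 1 x); destruct (Rlt_dec 1 y); lra.
  - pose proof (exitY_bounds p eps V Hq n (x + eta p eps)).
    pose proof (exitY_bounds p eps V Hq n (x - 1)).
    pose proof (exitY_bounds p eps V Hq n (y + eta p eps)).
    pose proof (exitY_bounds p eps V Hq n (y - 1)).
    pose proof (IH (x + eta p eps) (y + eta p eps) ltac:(lra)).
    pose proof (IH (x - 1) (y - 1) ltac:(lra)).
    destruct (Rle_dec (-1) x); [destruct (Rle_dec x 1)|];
    destruct (Rle_dec (-1) y); try destruct (Rle_dec y 1); try lra; nra.
Qed.

Definition gY p eps V x := real (Lim_seq (fun n => exitY p eps V n x)).

Lemma gY_lim p eps V x : 0 <= p_f p eps V <= 1 ->
  is_lim_seq (fun n => exitY p eps V n x) (gY p eps V x).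
Proof.
  intros Hq. apply Lim_seq_correct'.
  apply ex_finite_lim_seq_incr with 1.
  - intros n; apply exitY_incr; auto.
  - intros n; apply exitY_bounds; auto.
Qed.

Lemma gY_hi p eps V x : 1 < x -> gY p eps V x = 1.
Proof.
  intros H. unfold gY.
  rewrite (Lim_seq_ext _ (fun _ => 1)).
  - rewrite Lim_seq_const; reflexivity.
  - intros [|n]; cbn [exitY].
    + destruct (Rlt_dec 1 x); lra.
    + destruct (Rle_dec (-1) x); [destruct (Rle_dec x 1)|]; lra.
Qed.

Lemma gY_lo p eps V x : x < -1 -> gY p eps V x = 0.
Proof.
  intros H. unfold gY.
  rewrite (Lim_seq_ext _ (fun _ => 0)).
  - rewrite Lim_seq_const; reflexivity.
  - intros [|n]; cbn [exitY].
    + destruct (Rlt_dec 1 x); lra.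
    + destruct (Rle_dec (-1) x); [destruct (Rle_dec x 1)|]; lra.
Qed.

Lemma gY_rec p eps V x : 0 <= p_f p eps V <= 1 -> -1 <= x <= 1 ->
  gY p eps V x = p_f p eps V * gY p eps V (x + eta p eps)
                 + (1 - p_f p eps V) * gY p eps V (x - 1).
Proof.
  intros Hq Hx.
  pose proof (gY_lim p eps V x Hq) as H0.
  apply is_lim_seq_incr_1 in H0.
  assert (H1 : is_lim_seq (fun n => exitY p eps V (S n) x)
     (p_f p eps V * gY p eps V (x + eta p eps)
                 + (1 - p_f p eps V) * gY p eps V (x - 1))).
  { apply is_lim_seq_ext with
      (fun n => p_f p eps V * exitY p eps V n (x + eta p eps)
          + (1 - p_f p eps V) * exitY p eps V n (x - 1)).
    - intros n; cbn [exitY].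
      destruct (Rle_dec (-1) x); [destruct (Rle_dec x 1)|]; lra.
    - apply is_lim_seq_plus'.
      + apply (is_lim_seq_scal_l _ _ (gY p eps V (x + eta p eps))).
        apply gY_lim; auto.
      + apply (is_lim_seq_scal_l _ _ (gY p eps V (x - 1))).
        apply gY_lim; auto. }
  apply is_lim_seq_unique in H0. apply is_lim_seq_unique in H1.
  rewrite H0 in H1. injection H1; auto.
Qed.

Lemma gY_mono p eps V x y : 0 <= p_f p eps V <= 1 -> x <= y ->
  gY p eps V x <= gY p eps V y.
Proof.
  intros Hq Hxy.
  pose proof (is_lim_seq_le _ _ _ _ (fun n => exitY_monox p eps V Hq n x y Hxy)
     (gY_lim p eps V x Hq) (gY_lim p eps V y Hq)). exact H.
Qed.

Lemma gY_nonneg p eps V x : 0 <= p_f p eps V <= 1 -> 0 <= gY p eps V x.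
Proof.
  intros Hq.
  pose proof (is_lim_seq_le (fun _ => 0) _ 0 _ (fun n => proj1 (exitY_bounds p eps V Hq n x))
     (is_lim_seq_const 0) (gY_lim p eps V x Hq)). exact H.
Qed.
Lemma part2 (g : R -> R) (q h : R) (M : nat) :
  0 < q <= 1 -> 0 < h ->
  (forall x, 1 < x -> g x = 1) ->
  (forall x, x < -1 -> g x = 0) ->
  (forall x, -1 <= x <= 1 -> g x = q * g (x + h) + (1 - q) * g (x - 1)) ->
  (forall x y, x <= y -> g x <= g y) ->
  (forall x, 0 <= g x) ->
  1 < INR M * h -> (INR M - 1) * h <= 1 ->
  INR M * (1 - q) * q ^ M * g 0 + q ^ M <= g 0 /\
  q * q * g 0 <= INR M * (1 - q) * q ^ M * g 0 + q * q * q ^ M.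
Proof.
  intros Hq Hh Hhi Hlo Hrec Hmono Hnn HM1 HM2.
  assert (Hpow : forall n, 0 < q ^ n <= 1).
  { induction n as [|n IHn]; simpl; [lra|]. split; nra. }
  assert (LL : forall m y, -1 <= y -> 0 <= y + INR m * h -> q ^ m * g 0 <= g y).
  { induction m as [|m IH]; intros y H1 H2.
    - simpl in *. rewrite Rmult_1_l. apply Hmono. lra.
    - rewrite S_INR in H2. destruct (Rle_lt_dec 0 y) as [Hy|Hy].
      + pose proof (Hpow (S m)). pose proof (Hnn 0). pose proof (Hmono 0 y Hy). nra.
      + rewrite (Hrec y) by lra. rewrite (Hlo (y - 1)) by lra.
        pose proof (IH (y + h) ltac:(lra) ltac:(lra)). simpl. nra. }
  assert (UL : forall m y, y + INR m * h <= 0 -> g y <= q ^ m * g h).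
  { induction m as [|m IH]; intros y H1.
    - simpl in *. rewrite Rmult_1_l. apply Hmono. lra.
    - rewrite S_INR in H1. pose proof (pos_INR m). destruct (Rlt_le_dec y (-1)) as [Hy|Hy].
      + rewrite (Hlo y Hy). pose proof (Hpow (S m)). pose proof (Hnn h). nra.
      + rewrite (Hrec y) by nra. rewrite (Hlo (y - 1)) by nra.
        pose proof (IH (y + h) ltac:(nra)). simpl. nra. }
  assert (ML : forall K, (K <= M)%nat ->
     INR K * (1 - q) * q ^ M * g 0 + q ^ K * g (INR K * h) <= g 0).
  { induction K as [|K IH]; intros HK.
    - simpl. replace (0 * h) with 0 by ring. lra.
    - assert (HK' : INR K + 1 <= INR M) by (rewrite <- S_INR; apply le_INR; lia).
      pose proof (pos_INR K).
      specialize (IH ltac:(lia)).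
      rewrite (Hrec (INR K * h)) in IH by nra.
      pose proof (LL (M - K)%nat (INR K * h - 1) ltac:(nra)) as HL.
      rewrite minus_INR in HL by lia. specialize (HL ltac:(nra)).
      assert (Hqq : q ^ K * q ^ (M - K) = q ^ M) by (rewrite <- pow_add; f_equal; lia).
      rewrite S_INR. simpl pow.
      replace ((INR K + 1) * h) with (INR K * h + h) by ring.
      pose proof (Hpow K).
      assert ((1 - q) * q ^ M * g 0 <= q ^ K * (1 - q) * g (INR K * h - 1)).
      { rewrite <- Hqq.
        replace ((1 - q) * (q ^ K * q ^ (M - K)) * g 0) with (q ^ K * (1 - q) * (q ^ (M - K) * g 0)) by ring.
        apply Rmult_le_compat_l; nra. }
      lra. }
  assert (MU : forall K, (K <= M)%nat ->
     q * g 0 <= INR K * (1 - q) * q ^ M * g h + q ^ (S K) * g (INR K * h)).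
  { induction K as [|K IH]; intros HK.
    - simpl. replace (0 * h) with 0 by ring. lra.
    - assert (HK' : INR K + 1 <= INR M) by (rewrite <- S_INR; apply le_INR; lia).
      pose proof (pos_INR K).
      specialize (IH ltac:(lia)).
      rewrite (Hrec (INR K * h)) in IH by nra.
      pose proof (UL (M - S K)%nat (INR K * h - 1)) as HU.
      rewrite minus_INR, S_INR in HU by lia. specialize (HU ltac:(nra)).
      assert (Hqq : q ^ (S K) * q ^ (M - S K) = q ^ M) by (rewrite <- pow_add; f_equal; lia).
      rewrite S_INR. 
      replace ((INR K + 1) * h) with (INR K * h + h) by ring.
      replace (q ^ S (S K)) with (q ^ S K * q) by (simpl; ring).
      pose proof (Hpow (S K)).
      assert (q ^ S K * (1 - q) * g (INR K * h - 1) <= (1 - q) * q ^ M * g h).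
      { rewrite <- Hqq.
        replace ((1 - q) * (q ^ S K * q ^ (M - S K)) * g h) with (q ^ S K * (1 - q) * (q ^ (M - S K) * g h)) by ring.
        apply Rmult_le_compat_l; nra. }
      simpl pow in *. lra. }
  pose proof (ML M (le_n M)) as H1. pose proof (MU M (le_n M)) as H2.
  rewrite (Hhi (INR M * h) HM1) in H1, H2.
  assert (H0 : q * g h <= g 0).
  { rewrite (Hrec 0) by lra. rewrite Rplus_0_l. pose proof (Hnn (0 - 1)). nra. }
  pose proof (pos_INR M). pose proof (Hpow M). pose proof (Hnn h). pose proof (Hnn 0).
  split.
  - lra.
  - simpl pow in H2.
    assert (0 <= INR M * (1 - q) * q ^ M) by (apply Rmult_le_pos; [nra|lra]).
    nra.
Qed.
Definition kap (p : R) (V : value) : R := match V with G => 1 - p | B => p end.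
Definition MM p eps := Z.to_nat (up (1 / eta p eps)).
Definition cc p V eps := INR (MM p eps) * (1 - p_f p eps V).
Definition XX p V eps := p_f p eps V ^ MM p eps.
Definition sL p V eps := kap p V * ln (alpha p) * (1 - p * (1 - eps)) / (2 * p - 1).
Definition sU p V eps := kap p V * ln (alpha p) * (1 - (1 - p) * (1 - eps)) / (2 * p - 1).

Lemma ln_le_xm1 x : 0 < x -> ln x <= x - 1.
Proof. intros H. pose proof (exp_ineq1_le (ln x)). rewrite exp_ln in H0 by lra. lra. Qed.

Lemma ln_ge_1mi x : 0 < x -> 1 - / x <= ln x.
Proof.
  intros H. pose proof (ln_le_xm1 (/ x) ltac:(apply Rinv_0_lt_compat; lra)).
  rewrite ln_Rinv in H0 by lra. lra.
Qed.

Lemma one_minus_pf p eps V : 1 - p_f p eps V = kap p V * (1 - eps).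
Proof. destruct V; unfold p_f, a_par, b_par, kap; ring. Qed.

Lemma kap_bounds p V : 1/2 < p < 1 -> 0 < kap p V < 1.
Proof. destruct V; unfold kap; lra. Qed.

Lemma ln_alpha_pos p : 1/2 < p < 1 -> 0 < ln (alpha p).
Proof.
  intros Hp. rewrite <- ln_1. apply ln_increasing; [lra|].
  unfold alpha. apply (Rmult_lt_reg_r (1 - p)); [lra|].
  unfold Rdiv. rewrite Rmult_assoc, Rinv_l by lra. lra.
Qed.

Lemma t_par_eq p V : 1/2 < p < 1 -> t_par p V = kap p V * ln (alpha p) / (2 * p - 1).
Proof.
  intros Hp.
  assert (Ha : alpha p - 1 = (2 * p - 1) / (1 - p)) by (unfold alpha; field; lra).
  assert (Ha' : alpha p = p / (1 - p)) by reflexivity.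
  destruct V; unfold t_par, kap; rewrite Ha.
  - field; lra.
  - rewrite Ha' at 1. field; lra.
Qed.

Lemma pointwise p V eps : 1/2 < p < 1 -> 0 < eps < 1 ->
  0 < p_f p eps V < 1 /\ 0 < eta p eps /\
  1 < INR (MM p eps) * eta p eps /\ (INR (MM p eps) - 1) * eta p eps <= 1 /\
  sL p V eps <= cc p V eps <= sU p V eps + kap p V * (1 - eps) /\
  - cc p V eps / p_f p eps V <= INR (MM p eps) * ln (p_f p eps V) <= - cc p V eps /\
  XX p V eps = exp (INR (MM p eps) * ln (p_f p eps V)).
Proof.
  intros Hp He.
  pose proof (kap_bounds p V Hp) as Hk.
  pose proof (one_minus_pf p eps V) as Hq.
  set (q := p_f p eps V) in *.
  set (k := kap p V) in *.
  set (d := 1 - eps).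
  assert (Hq1 : 0 < q < 1) by (unfold d in *; nra).
  pose proof (ln_alpha_pos p Hp) as Hla.
  set (la := ln (alpha p)) in *.
  assert (Hr : a_par p eps / (1 - b_par p eps) = (1 - (1 - p) * d) / (1 - p * d))
    by (unfold a_par, b_par, d; f_equal; ring).
  set (r := (1 - (1 - p) * d) / (1 - p * d)) in *.
  assert (Hd : 0 < d < 1) by (unfold d; lra).
  assert (Hr0 : 0 < r) by (unfold r; apply Rdiv_lt_0_compat; nra).
  assert (Hhi : r - 1 = (2 * p - 1) * d / (1 - p * d)) by (unfold r; field; nra).
  assert (Hlo : 1 - / r = (2 * p - 1) * d / (1 - (1 - p) * d)) by (unfold r; field; nra).
  set (Lhi := (2 * p - 1) * d / (1 - p * d)) in *.
  set (Llo := (2 * p - 1) * d / (1 - (1 - p) * d)) in *.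
  assert (HLlo : 0 < Llo) by (unfold Llo; apply Rdiv_lt_0_compat; nra).
  pose proof (ln_le_xm1 r Hr0). pose proof (ln_ge_1mi r Hr0).
  assert (Heta : eta p eps = ln r / la) by (unfold eta; rewrite Hr; reflexivity).
  set (L := ln r) in *.
  assert (HL : Llo <= L <= Lhi) by lra.
  assert (Hetap : 0 < eta p eps) by (rewrite Heta; apply Rdiv_lt_0_compat; lra).
  assert (Hinv : 1 / eta p eps = la / L) by (rewrite Heta; field; lra).
  destruct (archimed (1 / eta p eps)) as [Ha1 Ha2].
  assert (HMeq : INR (MM p eps) = IZR (up (1 / eta p eps))).
  { unfold MM. rewrite INR_IZR_INZ, Z2Nat.id; [reflexivity|].
    apply le_IZR. simpl. assert (0 < 1 / eta p eps) by (apply Rdiv_lt_0_compat; lra). lra. }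
  set (M := INR (MM p eps)) in *.
  assert (HM1 : 1 < M * eta p eps).
  { rewrite HMeq. apply (Rmult_lt_compat_r (eta p eps)) in Ha1; [|lra].
    replace (1 / eta p eps * eta p eps) with 1 in Ha1 by (field; lra). lra. }
  assert (HM2 : (M - 1) * eta p eps <= 1).
  { assert (M - 1 <= 1 / eta p eps) by lra.
    apply (Rmult_le_compat_r (eta p eps)) in H1; [|lra].
    replace (1 / eta p eps * eta p eps) with 1 in H1 by (field; lra). lra. }
  assert (HM0 : 0 <= M) by (unfold M; apply pos_INR).
  assert (Hcc : cc p V eps = M * (k * d)) by (unfold cc; fold q; rewrite Hq; reflexivity).
  split; [lra|]. split; [lra|]. split; [lra|]. split; [lra|].
  split.
  - rewrite Hcc.
    assert (HiL : / Lhi <= / L <= / Llo) by (split; apply Rinv_le_contravar; lra).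
    assert (Hkd : 0 < k * d) by nra.
    assert (E1 : sL p V eps = k * d * la * / Lhi).
    { unfold sL, Lhi. fold k la. unfold d. field; repeat split; try nra; try lra. }
    assert (E2 : sU p V eps = k * d * la * / Llo).
    { unfold sU, Llo. fold k la. unfold d. field; repeat split; try nra; try lra. }
    rewrite E1, E2. rewrite <- HMeq in Ha1, Ha2. rewrite Hinv in Ha1, Ha2.
    unfold Rdiv in Ha1, Ha2.
    split.
    + assert (k * d * la * / Lhi <= k * d * la * / L).
      { apply Rmult_le_compat_l; [nra|lra]. }
      nra.
    + assert (k * d * la * / L <= k * d * la * / Llo).
      { apply Rmult_le_compat_l; [nra|lra]. }
      nra.
  - split.
    + pose proof (ln_le_xm1 q ltac:(lra)). pose proof (ln_ge_1mi q ltac:(lra)).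
      assert (Hqi : 1 - / q = - (1 - q) / q) by (field; lra).
      rewrite Hcc. rewrite Hq in Hqi. rewrite Hqi in H2.
      split.
      * unfold Rdiv in *. 
        replace (- (M * (k * d)) * / q) with (M * (- (k * d) * / q)) by ring.
        unfold d; apply Rmult_le_compat_l; lra.
      * replace (- (M * (k * d))) with (M * (q - 1)) by (unfold d; rewrite <- Hq; ring).
        apply Rmult_le_compat_l; lra.
    + unfold XX. fold q. rewrite <- Rpower_pow by lra. reflexivity.
Qed.
Lemma lim_plus {T : Type} {F : (T -> Prop) -> Prop} {FF : Filter F} (f g : T -> R) a b : filterlim f F (locally a) -> filterlim g F (locally b) ->
  filterlim (fun x => f x + g x) F (locally (a + b)).
Proof. intros Hf Hg. exact (filterlim_comp_2 f g Rplus Hf Hg (filterlim_plus a b)). Qed.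

Lemma lim_mult {T : Type} {F : (T -> Prop) -> Prop} {FF : Filter F} (f g : T -> R) a b : filterlim f F (locally a) -> filterlim g F (locally b) ->
  filterlim (fun x => f x * g x) F (locally (a * b)).
Proof. intros Hf Hg. exact (filterlim_comp_2 f g Rmult Hf Hg (filterlim_mult a b)). Qed.

Lemma lim_const {T : Type} {F : (T -> Prop) -> Prop} {FF : Filter F} (a : R) : filterlim (fun _ : T => a) F (locally a).
Proof. apply filterlim_const. Qed.

Lemma lim_inv {T : Type} {F : (T -> Prop) -> Prop} {FF : Filter F} (f : T -> R) a : a <> 0 -> filterlim f F (locally a) ->
  filterlim (fun x => / f x) F (locally (/ a)).
Proof. intros Ha Hf. eapply filterlim_comp; [exact Hf|exact (continuous_Rinv a Ha)]. Qed.

Lemma lim_exp {T : Type} {F : (T -> Prop) -> Prop} {FF : Filter F} (f : T -> R) a : filterlim f F (locally a) ->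
  filterlim (fun x => exp (f x)) F (locally (exp a)).
Proof. intros Hf. eapply filterlim_comp; [exact Hf|exact (continuous_exp a)]. Qed.

Lemma lim_squeeze {T : Type} {F : (T -> Prop) -> Prop} {FF : Filter F} (f g h : T -> R) l : F (fun x => f x <= g x <= h x) ->
  filterlim f F (locally l) -> filterlim h F (locally l) -> filterlim g F (locally l).
Proof. intros H Hf Hh. exact (filterlim_le_le f g h (Finite l) H Hf Hh). Qed.

Lemma lim_pos {T : Type} {F : (T -> Prop) -> Prop} {FF : Filter F} (f : T -> R) l : filterlim f F (locally l) -> 0 < l -> F (fun x => 0 < f x).
Proof.
  intros Hf Hl. apply filterlim_locally with (eps := mkposreal l Hl) in Hf.
  apply (filter_imp _ _ ) with (2 := Hf). intros x Hx.
  unfold ball in Hx; simpl in Hx. unfold AbsRing_ball, abs, minus, plus, opp in Hx; simpl in Hx.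
  apply Rabs_def2 in Hx. lra.
Qed.

Lemma lim_ext {T : Type} {F : (T -> Prop) -> Prop} {FF : Filter F} (f g : T -> R) l : F (fun x => f x = g x) -> filterlim f F (locally l) ->
  filterlim g F (locally l).
Proof. apply filterlim_ext_loc. Qed.

Lemma lim_eq {T : Type} {F : (T -> Prop) -> Prop} {FF : Filter F} (f : T -> R) (l l' : R) : l = l' -> filterlim f F (locally l) -> filterlim f F (locally l').
Proof. intros ->; auto. Qed.

Lemma at_left_01 : at_left 1 (fun e => 0 < e < 1).
Proof.
  unfold at_left, within. exists (mkposreal 1 Rlt_0_1). intros y Hy Hy1.
  unfold ball in Hy; simpl in Hy. unfold AbsRing_ball, abs, minus, plus, opp in Hy; simpl in Hy.
  apply Rabs_def2 in Hy. lra.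
Qed.

Lemma lim_id_left : filterlim (fun e => e) (at_left 1) (locally 1).
Proof.
  eapply filterlim_filter_le_1; [|apply filterlim_id].
  intros P HP. unfold at_left, within. apply filter_imp with P; auto.
Qed.

Lemma lim_affine A B : filterlim (fun e => A + B * e) (at_left 1) (locally (A + B)).
Proof.
  replace (A + B) with (A + B * 1) by ring.
  apply lim_plus; [apply lim_const|]. apply lim_mult; [apply lim_const|apply lim_id_left].
Qed.

Lemma P_bounds p V eps : 1/2 < p < 1 -> 0 < eps < 1 ->
  (0 < 1 - cc p V eps * XX p V eps ->
     XX p V eps * / (1 - cc p V eps * XX p V eps) <= P_Ycas p eps V) /\
  (0 < p_f p eps V * p_f p eps V - cc p V eps * XX p V eps ->
     P_Ycas p eps V <= p_f p eps V * p_f p eps V * XX p V eps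
        * / (p_f p eps V * p_f p eps V - cc p V eps * XX p V eps)).
Proof.
  intros Hp He.
  destruct (pointwise p V eps Hp He) as (Hq & Heta & HM1 & HM2 & _).
  assert (Hq' : 0 <= p_f p eps V <= 1) by lra.
  destruct (part2 (gY p eps V) (p_f p eps V) (eta p eps) (MM p eps) ltac:(lra) Heta
    (gY_hi p eps V) (gY_lo p eps V) (fun x Hx => gY_rec p eps V x Hq' Hx)
    (fun x y Hxy => gY_mono p eps V x y Hq' Hxy) (fun x => gY_nonneg p eps V x Hq') HM1 HM2)
    as [H1 H2].
  change (P_Ycas p eps V) with (gY p eps V 0).
  unfold cc, XX.
  split; intros Hd.
  - apply Rle_div_l; [lra|]. nra.
  - apply Rle_div_r; [lra|]. nra.
Qed.

Theorem mainTheorem6 (p : R) (V : value) :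
  1 / 2 < p < 1 ->
  filterlim (fun eps => P_Ycas p eps V) (at_left 1)
    (locally (1 / (exp (t_par p V) - t_par p V))).
Proof.
  intros Hp.
  pose proof (t_par_eq p V Hp) as HT.
  pose proof (kap_bounds p V Hp) as Hk.
  pose proof (ln_alpha_pos p Hp) as Hla.
  set (T := t_par p V) in *.
  set (k := kap p V) in *.
  set (la := ln (alpha p)) in *.
  set (E := exp (- T)).
  pose proof at_left_01 as H01.
  assert (Hpw := filter_imp _ _ (fun e He => pointwise p V e Hp He) H01).
  assert (Hc : filterlim (cc p V) (at_left 1) (locally T)).
  { apply (lim_squeeze (sL p V) _ (fun e => sU p V e + kap p V * (1 - e))).
    - apply (filter_imp _ _ (fun e H => proj1 (proj2 (proj2 (proj2 (proj2 H)))))) in Hpw. exact Hpw.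
    - apply (lim_ext (fun e => k * la * (1 - p) / (2 * p - 1) + k * la * p / (2 * p - 1) * e)).
      + apply filter_forall. intros e. unfold sL. fold k la. field. lra.
      + eapply lim_eq; [|apply lim_affine]. rewrite HT; field; lra.
    - apply (lim_ext (fun e => (k * la * p / (2 * p - 1) + k) + (k * la * (1 - p) / (2 * p - 1) - k) * e)).
      + apply filter_forall. intros e. unfold sU. fold k la. field. lra.
      + eapply lim_eq; [|apply lim_affine]. rewrite HT; field; lra. }
  assert (Hq : filterlim (fun e => p_f p e V) (at_left 1) (locally 1)).
  { apply (lim_ext (fun e => (1 - k) + k * e)).
    - apply filter_forall. intros e. pose proof (one_minus_pf p e V). fold k in H. lra.
    - eapply lim_eq; [|apply lim_affine]. ring. }
  assert (HmC : filterlim (fun e => - cc p V e) (at_left 1) (locally (- T))).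
  { apply (lim_ext (fun e => -1 * cc p V e)); [apply filter_forall; intros; ring|].
    apply (lim_eq _ (-1 * T)); [ring|]. apply lim_mult; [apply lim_const|exact Hc]. }
  assert (Hml : filterlim (fun e => INR (MM p e) * ln (p_f p e V)) (at_left 1) (locally (- T))).
  { apply (lim_squeeze (fun e => - cc p V e / p_f p e V) _ (fun e => - cc p V e)).
    - apply (filter_imp _ _ (fun e H => proj1 (proj2 (proj2 (proj2 (proj2 (proj2 H))))))) in Hpw. exact Hpw.
    - apply (lim_eq _ (- T * / 1)); [field|]. apply lim_mult; [exact HmC|].
      apply lim_inv; [lra|exact Hq].
    - exact HmC. }
  assert (HX : filterlim (XX p V) (at_left 1) (locally E)).
  { apply (lim_ext (fun e => exp (INR (MM p e) * ln (p_f p e V)))).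
    - apply (filter_imp _ _ (fun e H => eq_sym (proj2 (proj2 (proj2 (proj2 (proj2 (proj2 H)))))))) in Hpw. exact Hpw.
    - apply lim_exp. exact Hml. }
  assert (HcX : filterlim (fun e => cc p V e * XX p V e) (at_left 1) (locally (T * E))).
  { apply lim_mult; assumption. }
  assert (HTE : T * E < 1).
  { unfold E. rewrite exp_Ropp. pose proof (exp_ineq1_le T). pose proof (exp_pos T).
    apply (Rmult_lt_reg_r (exp T)); [lra|]. rewrite Rmult_assoc, Rinv_l by lra. lra. }
  assert (HD1 : filterlim (fun e => 1 - cc p V e * XX p V e) (at_left 1) (locally (1 - T * E))).
  { apply (lim_ext (fun e => 1 + -1 * (cc p V e * XX p V e))); [apply filter_forall; intros; ring|].
    apply (lim_eq _ (1 + -1 * (T * E))); [ring|]. apply lim_plus; [apply lim_const|].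
    apply lim_mult; [apply lim_const|exact HcX]. }
  assert (HD2 : filterlim (fun e => p_f p e V * p_f p e V - cc p V e * XX p V e) (at_left 1) (locally (1 - T * E))).
  { apply (lim_ext (fun e => p_f p e V * p_f p e V + -1 * (cc p V e * XX p V e))); [apply filter_forall; intros; ring|].
    apply (lim_eq _ (1 * 1 + -1 * (T * E))); [ring|]. apply lim_plus; [apply lim_mult; exact Hq|].
    apply lim_mult; [apply lim_const|exact HcX]. }
  pose proof (lim_pos _ _ HD1 ltac:(lra)) as HP1.
  pose proof (lim_pos _ _ HD2 ltac:(lra)) as HP2.
  assert (Hfin : E * / (1 - T * E) = 1 / (exp T - T)).
  { unfold E. rewrite exp_Ropp. pose proof (exp_ineq1_le T). pose proof (exp_pos T).
    field. lra. }
  rewrite <- Hfin.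
  apply (lim_squeeze (fun e => XX p V e * / (1 - cc p V e * XX p V e)) _
     (fun e => p_f p e V * p_f p e V * XX p V e * / (p_f p e V * p_f p e V - cc p V e * XX p V e))).
  - apply (filter_imp _ _ (fun e H => P_bounds p V e Hp H)) in H01.
    pose proof (filter_and _ _ H01 (filter_and _ _ HP1 HP2)) as Hall.
    apply (filter_imp _ _ ) with (2 := Hall). intros e [[Ha Hb] [Hc1 Hc2]]. split; auto.
  - apply lim_mult; [exact HX|]. apply lim_inv; [lra|exact HD1].
  - apply (lim_eq _ (1 * 1 * E * / (1 - T * E))); [ring|].
    apply lim_mult; [|apply lim_inv; [lra|exact HD2]].
    apply lim_mult; [apply lim_mult; exact Hq|exact HX].
Qed.
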